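(* Let $m\ge2$ and let $X_{2m}\subset\mathbb{R}^2$ be a regular polygon with $2m$ vertices centered at the origin, with circumradius $a_{2m}$ (half the length of its longest diagonal) satisfying $\sin\!\left(\frac{\pi-\frac{2\pi}{2m}}{2}\right)=\frac{1}{a_{2m}^2}$, i.e. $a_{2m}^2\cos(\pi/(2m))=1$. Then the dual Wulff shape $\mathcal{D}X_{2m}$ is not equal to $X_{2m}$, but $\mathcal{D}X_{2m}$ is congruent to $X_{2m}$. (For $m=2$: a square centered at the origin with $a_4^2=\sqrt2$, edge length $2/a_4$, has dual Wulff shape a different square centered at the origin with the same edge length.)
   Context: Every convex body $W\subset\mathbb{R}^{2}$ with the origin in its interior is a Wulff shape $\mathcal{W}_\gamma=\bigcap_{\theta\in S^1}\{x: x\cdot\theta\le\gamma(\theta)\}$ for some continuous $\gamma:S^1\to\mathbb{R}_+$. With $w(\theta)\theta$ the unique point of $\partial W$ on the ray $\{r\theta:r>0\}$, the dual Wulff shape is $\mathcal{D}W=\mathcal{W}_{\overline\gamma}$ with $\overline\gamma(\theta)=1/w(-\theta)$. *)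

(* Defs.v *)
From Stdlib Require Import Reals.
Open Scope R_scope.

Definition pt : Type := (R * R)%type.

Definition dot (x y : pt) : R := fst x * fst y + snd x * snd y.
Definition scale (r : R) (x : pt) : pt := (r * fst x, r * snd x).
Definition opp (x : pt) : pt := (- fst x, - snd x).
Definition dist (x y : pt) : R :=
  sqrt ((fst x - fst y) ^ 2 + (snd x - snd y) ^ 2).

Definition unit_vec (u : pt) : Prop := fst u ^ 2 + snd u ^ 2 = 1.

Definition vertex (m : nat) (a th0 : R) (k : nat) : pt :=
  (a * cos (th0 + INR k * (2 * PI / INR (2 * m))),
   a * sin (th0 + INR k * (2 * PI / INR (2 * m)))).

Definition regular_polygon (m : nat) (a th0 : R) (x : pt) : Prop :=
  exists lam : nat -> R,
    (forall k, (k < 2 * m)%nat -> 0 <= lam k) /\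
    sum_f_R0 lam (2 * m - 1) = 1 /\
    x = (sum_f_R0 (fun k => lam k * fst (vertex m a th0 k)) (2 * m - 1),
         sum_f_R0 (fun k => lam k * snd (vertex m a th0 k)) (2 * m - 1)).

Definition boundary (W : pt -> Prop) (x : pt) : Prop :=
  forall eps, 0 < eps ->
    (exists y, W y /\ dist x y < eps) /\ (exists z, ~ W z /\ dist x z < eps).

(* radial W u r  <->  r = w(u) : r > 0 and r u is a (the) boundary point of W
   on the ray through u. *)
Definition radial (W : pt -> Prop) (u : pt) (r : R) : Prop :=
  0 < r /\ boundary W (scale r u).

Definition wulff (gamma : pt -> R) (x : pt) : Prop :=
  forall u, unit_vec u -> dot x u <= gamma u.

(* Dual Wulff shape  D W = W_{gamma_bar},  gamma_bar(u) = 1 / w(-u).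
   Since w(-u) is the unique r with radial W (-u) r, this is stated
   relationally (no choice needed). *)
Definition dual_wulff (W : pt -> Prop) (x : pt) : Prop :=
  forall u, unit_vec u -> forall r, radial W (opp u) r -> dot x u <= 1 / r.

Definition congruent (A B : pt -> Prop) : Prop :=
  exists f : pt -> pt,
    (forall x y, dist (f x) (f y) = dist x y) /\
    (forall y, B y <-> exists x, A x /\ f x = y).

(* Main.v *)
Require Import Defs.
From Stdlib Require Import Reals.
From Stdlib Require Import Lra Lia Psatz Classical.
Open Scope R_scope.


Lemma INR2m m : INR (2 * m) = 2 * INR m.
Proof. rewrite mult_INR; simpl; ring. Qed.

Lemma vertex_period m a th k : (1 <= m)%nat ->
  vertex m a th k = vertex m a th (k mod (2 * m)).
Proof.
  intros Hm. unfold vertex.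
  assert (HM : 0 < INR m) by (apply lt_0_INR; lia).
  pose proof (Nat.div_mod_eq k (2*m)) as Hk.
  set (q := (k / (2*m))%nat) in *. set (r := (k mod (2*m))%nat) in *.
  assert (E : th + INR k * (2 * PI / INR (2 * m)) =
              (th + INR r * (2 * PI / INR (2 * m))) + 2 * INR q * PI).
  { rewrite Hk, plus_INR, !mult_INR. replace (INR 2) with 2 by (simpl; ring). field. lra. }
  rewrite E, cos_period, sin_period. reflexivity.
Qed.

Lemma vertex_half m a th k : (1 <= m)%nat ->
  vertex m a th (k + m) = opp (vertex m a th k).
Proof.
  intros Hm. unfold vertex, opp.
  assert (HM : 0 < INR m) by (apply lt_0_INR; lia).
  assert (E : th + INR (k+m) * (2 * PI / INR (2 * m)) =
              (th + INR k * (2 * PI / INR (2 * m))) + PI).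
  { rewrite plus_INR, INR2m. field. lra. }
  rewrite E, neg_cos, neg_sin. simpl. f_equal; ring.
Qed.

Lemma sum_ind (j n : nat) (g : nat -> R) :
  sum_f_R0 (fun k => (if Nat.eqb k j then 1 else 0) * g k) n =
  if Nat.leb j n then g j else 0.
Proof.
  induction n as [|n IH].
  - simpl. destruct j; simpl; ring.
  - change (sum_f_R0 (fun k => (if Nat.eqb k j then 1 else 0) * g k) (S n)) with
     (sum_f_R0 (fun k => (if Nat.eqb k j then 1 else 0) * g k) n + (if Nat.eqb (S n) j then 1 else 0) * g (S n)).
    rewrite IH. destruct (Nat.eqb_spec (S n) j); destruct (Nat.leb_spec j n);
    destruct (Nat.leb_spec j (S n)); subst; try lia; try ring.
Qed.

Lemma sum_dot (A f g : nat -> R) n1 n2 N :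
  sum_f_R0 (fun k => A k * f k) N * n1 + sum_f_R0 (fun k => A k * g k) N * n2 =
  sum_f_R0 (fun k => A k * (f k * n1 + g k * n2)) N.
Proof. induction N; simpl; [ring|]. rewrite <- IHN. ring. Qed.

Lemma sum_lin3 (A B C f : nat -> R) p q w N :
  sum_f_R0 (fun k => (p * A k + q * B k + w * C k) * f k) N =
  p * sum_f_R0 (fun k => A k * f k) N + q * sum_f_R0 (fun k => B k * f k) N
  + w * sum_f_R0 (fun k => C k * f k) N.
Proof. induction N; simpl; [ring|]. rewrite IHN. ring. Qed.

Lemma sum_mul1 (A : nat -> R) N : sum_f_R0 (fun k => A k * 1) N = sum_f_R0 A N.
Proof. induction N; simpl; [ring|]. rewrite IHN. ring. Qed.

Definition pcomb m a th (lam : nat -> R) : pt :=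
  (sum_f_R0 (fun k => lam k * fst (vertex m a th k)) (2 * m - 1),
   sum_f_R0 (fun k => lam k * snd (vertex m a th k)) (2 * m - 1)).

Lemma support m a th lam n1 n2 c : (1 <= m)%nat ->
  (forall k, (k < 2 * m)%nat -> 0 <= lam k) -> sum_f_R0 lam (2 * m - 1) = 1 ->
  (forall k, (k < 2 * m)%nat -> fst (vertex m a th k) * n1 + snd (vertex m a th k) * n2 <= c) ->
  fst (pcomb m a th lam) * n1 + snd (pcomb m a th lam) * n2 <= c.
Proof.
  intros Hm Hl Hs Hv. unfold pcomb; simpl. rewrite sum_dot.
  apply Rle_trans with (sum_f_R0 (fun k => lam k * c) (2*m-1)).
  - apply sum_Rle. intros k Hk. apply Rmult_le_compat_l. apply Hl; lia. apply Hv; lia.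
  - rewrite <- scal_sum, Hs. lra.
Qed.

Lemma vertex_in m a th j : (1 <= m)%nat ->
  regular_polygon m a th (vertex m a th j).
Proof.
  intros Hm. set (r := (j mod (2*m))%nat).
  assert (Hr : (r < 2*m)%nat) by (apply Nat.mod_upper_bound; lia).
  exists (fun k => if Nat.eqb k r then 1 else 0). split; [|split].
  - intros k _. destruct (Nat.eqb k r); lra.
  - rewrite <- sum_mul1, sum_ind. destruct (Nat.leb_spec r (2*m-1)); [ring|lia].
  - rewrite !sum_ind. destruct (Nat.leb_spec r (2*m-1)); [|lia].
    rewrite (vertex_period m a th j Hm). fold r. destruct (vertex m a th r); reflexivity.
Qed.

Lemma comb3_in m a th j1 j2 j3 p q w : (1 <= m)%nat ->
  0 <= p -> 0 <= q -> 0 <= w -> p + q + w = 1 ->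
  regular_polygon m a th
   (p * fst (vertex m a th j1) + q * fst (vertex m a th j2) + w * fst (vertex m a th j3),
    p * snd (vertex m a th j1) + q * snd (vertex m a th j2) + w * snd (vertex m a th j3)).
Proof.
  intros Hm Hp Hq Hw Hs.
  set (r1 := (j1 mod (2*m))%nat). set (r2 := (j2 mod (2*m))%nat). set (r3 := (j3 mod (2*m))%nat).
  assert (H1 : (r1 < 2*m)%nat) by (apply Nat.mod_upper_bound; lia).
  assert (H2 : (r2 < 2*m)%nat) by (apply Nat.mod_upper_bound; lia).
  assert (H3 : (r3 < 2*m)%nat) by (apply Nat.mod_upper_bound; lia).
  exists (fun k => p * (if Nat.eqb k r1 then 1 else 0) + q * (if Nat.eqb k r2 then 1 else 0)
                 + w * (if Nat.eqb k r3 then 1 else 0)). split; [|split].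
  - intros k _. destruct (Nat.eqb k r1), (Nat.eqb k r2), (Nat.eqb k r3); nra.
  - rewrite <- sum_mul1, sum_lin3, !sum_ind.
    destruct (Nat.leb_spec r1 (2*m-1)); [|lia].
    destruct (Nat.leb_spec r2 (2*m-1)); [|lia].
    destruct (Nat.leb_spec r3 (2*m-1)); [|lia]. lra.
  - rewrite !sum_lin3, !sum_ind.
    destruct (Nat.leb_spec r1 (2*m-1)); [|lia].
    destruct (Nat.leb_spec r2 (2*m-1)); [|lia].
    destruct (Nat.leb_spec r3 (2*m-1)); [|lia].
    rewrite (vertex_period m a th j1 Hm), (vertex_period m a th j2 Hm),
      (vertex_period m a th j3 Hm). reflexivity.
Qed.

Lemma cos_odd m K : (2 <= m)%nat ->
  cos ((2 * INR K - 1) * (PI / INR (2 * m))) <= cos (PI / INR (2 * m)).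
Proof.
  intros Hm.
  assert (HM : 2 <= INR m) by (replace 2 with (INR 2) by (simpl; ring); apply le_INR; lia).
  set (b := PI / INR (2 * m)).
  assert (Hb : PI = 2 * INR m * b) by (unfold b; rewrite INR2m; field; lra).
  assert (Hb0 : 0 < b) by (unfold b; rewrite INR2m; apply Rdiv_lt_0_compat; [apply PI_RGT_0|lra]).
  pose proof (Nat.div_mod_eq K (2*m)) as HK.
  set (q := (K / (2*m))%nat) in *. set (r := (K mod (2*m))%nat) in *.
  assert (Hr : (r < 2*m)%nat) by (apply Nat.mod_upper_bound; lia).
  assert (E : (2 * INR K - 1) * b = (2 * INR r - 1) * b + 2 * INR q * PI).
  { rewrite HK, plus_INR, !mult_INR. replace (INR 2) with 2 by (simpl; ring).
    rewrite Hb. ring. }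
  rewrite E, cos_period.
  destruct (Nat.eq_dec r 0) as [H0|H0].
  - rewrite H0. simpl. replace ((2*0-1)*b) with (-b) by ring. rewrite cos_neg. lra.
  - assert (Hr1 : 1 <= INR r) by (replace 1 with (INR 1) by reflexivity; apply le_INR; lia).
    assert (Hr2 : INR r + 1 <= 2 * INR m)
      by (rewrite <- INR2m; rewrite <- S_INR; apply le_INR; lia).
    set (x := (2 * INR r - 1) * b).
    assert (Hx1 : b <= x) by (unfold x; nra).
    assert (Hx2 : x <= 2 * PI - 3 * b) by (unfold x; rewrite Hb; nra).
    destruct (Rle_lt_dec x PI) as [Hp|Hp].
    + destruct (Req_dec x b) as [Heq|Hne]; [rewrite Heq; lra|].
      left. apply cos_decreasing_1; lra.
    + replace (cos x) with (cos (2 * PI - x)).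
      * left. apply cos_decreasing_1; lra.
      * replace (2 * PI - x) with (- (x + 2 * INR 1 * PI) + 4 * PI) by (simpl; ring).
        replace (4 * PI) with (2 * INR 2 * PI) by (simpl; ring).
        rewrite cos_period, cos_neg, cos_period. reflexivity.
Qed.

Lemma vnorm m a th k : fst (vertex m a th k) ^ 2 + snd (vertex m a th k) ^ 2 = a ^ 2.
Proof. unfold vertex; cbn [fst snd]. pose proof (sin2_cos2 (th + INR k * (2 * PI / INR (2 * m)))) as H. unfold Rsqr in H. nra. Qed.

Lemma dot_vw m a th0 i j : (2 <= m)%nat -> a ^ 2 * cos (PI / INR (2 * m)) = 1 ->
  dot (vertex m a th0 i) (vertex m a (th0 + PI / INR (2 * m)) j) <= 1.
Proof.
  intros Hm Ha.
  assert (HM : 2 <= INR m) by (replace 2 with (INR 2) by (simpl; ring); apply le_INR; lia).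
  unfold dot, vertex; cbn [fst snd].
  set (b := PI / INR (2 * m)).
  set (x := th0 + INR i * (2 * PI / INR (2 * m))).
  set (y := th0 + b + INR j * (2 * PI / INR (2 * m))).
  assert (E : a * cos x * (a * cos y) + a * sin x * (a * sin y) = a ^ 2 * cos (x - y))
    by (rewrite cos_minus; ring).
  rewrite E.
  assert (E2 : (x - y) + 2 * INR j * PI = (2 * INR (i + (2*m-1)*j) - 1) * b).
  { unfold x, y, b. rewrite plus_INR, (mult_INR (2*m-1) j), (minus_INR (2*m) 1) by lia. rewrite !INR2m.
    simpl. field. lra. }
  rewrite <- (cos_period (x - y) j), E2.
  pose proof (cos_odd m (i + (2*m-1)*j) Hm). fold b in H.
  assert (0 <= a ^ 2) by apply pow2_ge_0. apply Rle_trans with (a ^ 2 * cos b); [apply Rmult_le_compat_l; assumption|]. unfold b; lra.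
Qed.

Lemma dot_wv1 m a th0 j : (1 <= m)%nat -> a ^ 2 * cos (PI / INR (2 * m)) = 1 ->
  dot (vertex m a (th0 + PI / INR (2 * m)) j) (vertex m a th0 (S j)) = 1 /\
  dot (vertex m a (th0 + PI / INR (2 * m)) (S j)) (vertex m a th0 (S j)) = 1.
Proof.
  intros Hm Ha.
  assert (HM : 1 <= INR m) by (replace 1 with (INR 1) by reflexivity; apply le_INR; lia).
  unfold dot, vertex; cbn [fst snd].
  set (b := PI / INR (2 * m)).
  split.
  - replace (a * cos (th0 + b + INR j * (2 * PI / INR (2 * m))) *
       (a * cos (th0 + INR (S j) * (2 * PI / INR (2 * m)))) +
       a * sin (th0 + b + INR j * (2 * PI / INR (2 * m))) *
       (a * sin (th0 + INR (S j) * (2 * PI / INR (2 * m)))))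
     with (a ^ 2 * cos ((th0 + b + INR j * (2 * PI / INR (2 * m))) -
                        (th0 + INR (S j) * (2 * PI / INR (2 * m))))) by (rewrite cos_minus; ring).
    replace ((th0 + b + INR j * (2 * PI / INR (2 * m))) -
             (th0 + INR (S j) * (2 * PI / INR (2 * m)))) with (- b).
    + rewrite cos_neg. exact Ha.
    + unfold b. rewrite S_INR, INR2m. field. lra.
  - replace (a * cos (th0 + b + INR (S j) * (2 * PI / INR (2 * m))) *
       (a * cos (th0 + INR (S j) * (2 * PI / INR (2 * m)))) +
       a * sin (th0 + b + INR (S j) * (2 * PI / INR (2 * m))) *
       (a * sin (th0 + INR (S j) * (2 * PI / INR (2 * m)))))
     with (a ^ 2 * cos ((th0 + b + INR (S j) * (2 * PI / INR (2 * m))) -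
                        (th0 + INR (S j) * (2 * PI / INR (2 * m))))) by (rewrite cos_minus; ring).
    replace ((th0 + b + INR (S j) * (2 * PI / INR (2 * m))) -
             (th0 + INR (S j) * (2 * PI / INR (2 * m)))) with b by ring.
    exact Ha.
Qed.

Lemma det_ww m a th j :
  fst (vertex m a th j) * snd (vertex m a th (S j)) - snd (vertex m a th j) * fst (vertex m a th (S j))
  = a ^ 2 * sin (2 * PI / INR (2 * m)).
Proof.
  unfold vertex; cbn [fst snd].
  transitivity (a ^ 2 * sin ((th + INR (S j) * (2 * PI / INR (2 * m))) - (th + INR j * (2 * PI / INR (2 * m))))).
  - rewrite sin_minus. ring.
  - f_equal. f_equal. rewrite S_INR. ring.
Qed.

Lemma ivt (g : nat -> R) m : (forall k, g (k + m)%nat = - g k) ->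
  exists k, 0 <= g k /\ g (S k) <= 0.
Proof.
  intros Hg. apply NNPP. intros Hn.
  assert (H : forall k, 0 <= g k -> 0 < g (S k)).
  { intros k Hk. destruct (Rle_lt_dec (g (S k)) 0); [|assumption].
    exfalso. apply Hn. exists k. split; assumption. }
  assert (Hi : forall s, 0 <= g s -> forall i, 0 <= g (s + i)%nat).
  { intros s Hs i. induction i. rewrite Nat.add_0_r; assumption.
    rewrite Nat.add_succ_r. left. apply H. assumption. }
  destruct (Rle_lt_dec 0 (g 0%nat)) as [H0|H0].
  - pose proof (Hi 0%nat H0 m) as Hm. simpl in Hm. pose proof (Hg 0%nat) as E. simpl in E.
    rewrite E in Hm. assert (Hz : g 0%nat = 0) by lra.
    pose proof (H 0%nat H0) as G1. pose proof (Hi 0%nat H0 (1 + m)%nat) as G2. simpl in G2.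
    pose proof (Hg 1%nat) as E1. simpl in E1. rewrite E1 in G2. lra.
  - pose proof (Hg 0%nat) as E. simpl in E.
    assert (Hm : 0 <= g m) by lra.
    pose proof (Hi m Hm m) as H2. rewrite Hg in H2. lra.
Qed.

Lemma dist_lt x y eps : 0 < eps ->
  (fst x - fst y) ^ 2 + (snd x - snd y) ^ 2 < eps ^ 2 -> Defs.dist x y < eps.
Proof.
  intros He H. unfold Defs.dist. rewrite <- (sqrt_square eps) by lra.
  apply sqrt_lt_1_alt. split; [|nra].
  pose proof (pow2_ge_0 (fst x - fst y)). pose proof (pow2_ge_0 (snd x - snd y)). lra.
Qed.

Lemma dist_lt_inv x y eps :
  Defs.dist x y < eps -> (fst x - fst y) ^ 2 + (snd x - snd y) ^ 2 < eps ^ 2.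
Proof.
  unfold Defs.dist. intros H.
  set (s := (fst x - fst y) ^ 2 + (snd x - snd y) ^ 2) in *.
  assert (Hs : 0 <= s) by (unfold s; pose proof (pow2_ge_0 (fst x - fst y));
                            pose proof (pow2_ge_0 (snd x - snd y)); lra).
  pose proof (sqrt_sqrt s Hs). pose proof (sqrt_pos s). nra.
Qed.

Lemma P_elim m a th x : regular_polygon m a th x ->
  exists lam, (forall k, (k < 2 * m)%nat -> 0 <= lam k) /\ sum_f_R0 lam (2 * m - 1) = 1 /\
    x = pcomb m a th lam.
Proof. intros [lam [H1 [H2 H3]]]. exists lam. auto. Qed.

Lemma P_support m a th x n1 n2 c : (1 <= m)%nat -> regular_polygon m a th x ->
  (forall k, (k < 2 * m)%nat -> fst (vertex m a th k) * n1 + snd (vertex m a th k) * n2 <= c) ->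
  fst x * n1 + snd x * n2 <= c.
Proof.
  intros Hm Hx Hv. destruct (P_elim _ _ _ _ Hx) as [lam [H1 [H2 H3]]]. subst x.
  apply support; auto.
Qed.

Lemma boundary_negv m a th k : (1 <= m)%nat -> 0 < a ->
  boundary (regular_polygon m a th) (opp (vertex m a th k)).
Proof.
  intros Hm Ha eps He. split.
  - exists (opp (vertex m a th k)). split.
    + rewrite <- vertex_half by assumption. apply vertex_in; assumption.
    + apply dist_lt; [assumption|]. simpl. nra.
  - set (t := eps / (2 * a)).
    assert (Ht : 0 < t) by (unfold t; apply Rdiv_lt_0_compat; lra).
    assert (Hta : t * a = eps / 2) by (unfold t; field; lra).
    pose proof (vnorm m a th k) as Hn.
    set (v1 := fst (vertex m a th k)) in *. set (v2 := snd (vertex m a th k)) in *.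
    exists (scale (1 + t) (opp (vertex m a th k))). split.
    + intros Hz.
      assert (Hs := P_support m a th _ (- v1) (- v2) (a ^ 2) Hm Hz).
      assert (Hle : fst (scale (1 + t) (opp (vertex m a th k))) * - v1 +
                    snd (scale (1 + t) (opp (vertex m a th k))) * - v2 <= a ^ 2).
      { apply Hs. intros i _. pose proof (vnorm m a th i) as Hi.
        set (p1 := fst (vertex m a th i)) in *. set (p2 := snd (vertex m a th i)) in *.
        pose proof (pow2_ge_0 (p1+v1)). pose proof (pow2_ge_0 (p2+v2)). nra. }
      unfold scale, opp in Hle. cbn [fst snd] in Hle. fold v1 v2 in Hle.
      assert (0 < a ^ 2) by nra. nra.
    + apply dist_lt; [assumption|]. unfold scale, opp. cbn [fst snd]. fold v1 v2.
      replace ((- v1 - (1 + t) * - v1) ^ 2 + (- v2 - (1 + t) * - v2) ^ 2)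
        with (t ^ 2 * (v1 ^ 2 + v2 ^ 2)) by ring.
      rewrite Hn. replace (t ^ 2 * a ^ 2) with ((t * a) ^ 2) by ring. rewrite Hta. nra.
Qed.

Definition DP m a th := dual_wulff (regular_polygon m a th).

Lemma key_dual m a th y k : (1 <= m)%nat -> 0 < a -> DP m a th y ->
  dot y (vertex m a th k) <= 1.
Proof.
  intros Hm Ha Hy.
  pose proof (vnorm m a th k) as Hn.
  set (u := scale (1 / a) (vertex m a th k)).
  assert (Hu : unit_vec u).
  { unfold unit_vec, u, scale. cbn [fst snd].
    replace ((1 / a * fst (vertex m a th k)) ^ 2 + (1 / a * snd (vertex m a th k)) ^ 2)
      with ((fst (vertex m a th k) ^ 2 + snd (vertex m a th k) ^ 2) / a ^ 2) by (field; lra).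
    rewrite Hn. field. lra. }
  assert (Hr : radial (regular_polygon m a th) (opp u) a).
  { split; [assumption|].
    replace (scale a (opp u)) with (opp (vertex m a th k)).
    - apply boundary_negv; assumption.
    - unfold u, scale, opp. cbn [fst snd]. destruct (vertex m a th k) as [p q]. cbn [fst snd].
      f_equal; field; lra. }
  pose proof (Hy u Hu a Hr) as H. unfold dot, u, scale in H |- *. cbn [fst snd] in H.
  assert (E : fst y * (1 / a * fst (vertex m a th k)) + snd y * (1 / a * snd (vertex m a th k))
              = (fst y * fst (vertex m a th k) + snd y * snd (vertex m a th k)) / a) by (field; lra).
  rewrite E in H. apply Rmult_le_compat_r with (r := a) in H; [|lra].
  replace ((fst y * fst (vertex m a th k) + snd y * snd (vertex m a th k)) / a * a)
    with (fst y * fst (vertex m a th k) + snd y * snd (vertex m a th k)) in H by (field; lra).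
  replace (1 / a * a) with 1 in H by (field; lra). exact H.
Qed.

Lemma closure_le (P : pt -> Prop) p n a : 0 < a -> fst n ^ 2 + snd n ^ 2 = a ^ 2 ->
  boundary P p -> (forall x, P x -> dot x n <= 1) -> dot p n <= 1.
Proof.
  intros Ha Hn Hb HP. destruct (Rle_lt_dec (dot p n) 1) as [H|H]; [exact H|exfalso].
  set (d := dot p n - 1).
  assert (Hd : 0 < d) by (unfold d; lra).
  destruct (Hb (d / a) ltac:(apply Rdiv_lt_0_compat; lra)) as [[z [Hz Hdz]] _].
  apply dist_lt_inv in Hdz. pose proof (HP z Hz) as Hzn.
  unfold dot in *.
  set (e1 := fst p - fst z) in *. set (e2 := snd p - snd z) in *.
  assert (Hdot : e1 * fst n + e2 * snd n >= d) by (unfold e1, e2, d; lra).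
  assert (CS : (e1 * fst n + e2 * snd n) ^ 2 <= (e1 ^ 2 + e2 ^ 2) * a ^ 2).
  { rewrite <- Hn. pose proof (pow2_ge_0 (e1 * snd n - e2 * fst n)). nra. }
  assert (E : (d / a) ^ 2 * a ^ 2 = d ^ 2) by (field; lra).
  assert (0 < a ^ 2) by (apply pow_lt; lra).
  assert ((e1 ^ 2 + e2 ^ 2) * a ^ 2 < d ^ 2) by (rewrite <- E; apply Rmult_lt_compat_r; lra).
  assert (d ^ 2 <= (e1 * fst n + e2 * snd n) ^ 2).
  { simpl. rewrite !Rmult_1_r. apply Rmult_le_compat; lra. }
  lra.
Qed.

Lemma Q_in_DP m a th0 y : (2 <= m)%nat -> 0 < a -> a ^ 2 * cos (PI / INR (2 * m)) = 1 ->
  regular_polygon m a (th0 + PI / INR (2 * m)) y -> DP m a th0 y.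
Proof.
  intros Hm Ha Hc Hy u Hu r [Hr Hb].
  set (b := PI / INR (2 * m)) in *.
  assert (Hm1 : (1 <= m)%nat) by lia.
  assert (Hall : forall j, dot (scale r (opp u)) (vertex m a (th0 + b) j) <= 1).
  { intros j. apply (closure_le _ _ _ a Ha (vnorm _ _ _ _) Hb).
    intros x Hx. unfold dot. apply (P_support m a th0 x _ _ 1 Hm1 Hx).
    intros k _. apply dot_vw; assumption. }
  unfold dot. apply (P_support m a (th0 + b) y _ _ (1 / r) Hm1 Hy).
  intros k _. pose proof (Hall (k + m)%nat) as H. rewrite vertex_half in H by assumption.
  unfold dot, scale, opp in H. cbn [fst snd] in H.
  set (w1 := fst (vertex m a (th0 + b) k)) in *. set (w2 := snd (vertex m a (th0 + b) k)) in *.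
  assert (E : w1 * fst u + w2 * snd u = (r * fst u * w1 + r * snd u * w2) / r) by (field; lra).
  rewrite E. unfold Rdiv. apply Rmult_le_compat_r.
  - left; apply Rinv_0_lt_compat; lra.
  - lra.
Qed.

Lemma DP_in_Q m a th0 y : (2 <= m)%nat -> 0 < a -> a ^ 2 * cos (PI / INR (2 * m)) = 1 ->
  DP m a th0 y -> regular_polygon m a (th0 + PI / INR (2 * m)) y.
Proof.
  intros Hm Ha Hc Hy.
  assert (Hm1 : (1 <= m)%nat) by lia.
  assert (HM : 2 <= INR m) by (replace 2 with (INR 2) by (simpl; ring); apply le_INR; lia).
  pose proof (fun k => key_dual m a th0 y k Hm1 Ha Hy) as Hv.
  set (b := PI / INR (2 * m)) in *.
  set (w := vertex m a (th0 + b)).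
  set (g := fun k => fst (w k) * snd y - snd (w k) * fst y).
  assert (Hg : forall k, g (k + m)%nat = - g k).
  { intros k. unfold g, w. rewrite vertex_half by assumption. unfold opp. cbn [fst snd]. ring. }
  destruct (ivt g m Hg) as [k [Hk1 Hk2]].
  set (D := fst (w k) * snd (w (S k)) - snd (w k) * fst (w (S k))).
  assert (HD : 0 < D).
  { unfold D, w. rewrite det_ww. apply Rmult_lt_0_compat. apply pow_lt; lra.
    apply sin_gt_0; rewrite INR2m.
    - apply Rdiv_lt_0_compat; [pose proof PI_RGT_0; lra | lra].
    - pose proof PI_RGT_0. apply (Rmult_lt_reg_r (2 * INR m)); [lra|].
      unfold Rdiv. rewrite Rmult_assoc, Rinv_l by lra. nra. }
  set (s := - g (S k) / D). set (t := g k / D).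
  assert (Hs : 0 <= s) by (unfold s; apply Rmult_le_pos; [lra| left; apply Rinv_0_lt_compat; lra]).
  assert (Ht : 0 <= t) by (unfold t; apply Rmult_le_pos; [lra| left; apply Rinv_0_lt_compat; lra]).
  assert (Y1 : fst y = s * fst (w k) + t * fst (w (S k))).
  { unfold s, t, g. field_simplify_eq; [|lra]. unfold D. ring. }
  assert (Y2 : snd y = s * snd (w k) + t * snd (w (S k))).
  { unfold s, t, g. field_simplify_eq; [|lra]. unfold D. ring. }
  destruct (dot_wv1 m a th0 k Hm1 Hc) as [E1 E2].
  assert (Hst : s + t <= 1).
  { pose proof (Hv (S k)) as H. unfold dot in H, E1, E2. rewrite Y1, Y2 in H.
    fold b w in E1, E2.
    replace ((s * fst (w k) + t * fst (w (S k))) * fst (vertex m a th0 (S k)) +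
             (s * snd (w k) + t * snd (w (S k))) * snd (vertex m a th0 (S k)))
      with (s * (fst (w k) * fst (vertex m a th0 (S k)) + snd (w k) * snd (vertex m a th0 (S k)))
            + t * (fst (w (S k)) * fst (vertex m a th0 (S k)) + snd (w (S k)) * snd (vertex m a th0 (S k))))
      in H by ring.
    rewrite E1, E2 in H. lra. }
  pose proof (comb3_in m a (th0 + b) k (S k) (k + m) (s + (1 - s - t) / 2) t ((1 - s - t) / 2)
                Hm1 ltac:(lra) Ht ltac:(lra) ltac:(lra)) as HQ.
  rewrite (vertex_half m a (th0 + b) k Hm1) in HQ. unfold opp in HQ. cbn [fst snd] in HQ.
  fold w in HQ.
  replace y with (fst y, snd y) by (destruct y; reflexivity).
  rewrite Y1, Y2. replace (s * fst (w k) + t * fst (w (S k))) with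
    ((s + (1 - s - t) / 2) * fst (w k) + t * fst (w (S k)) + (1 - s - t) / 2 * - fst (w k)) by field.
  replace (s * snd (w k) + t * snd (w (S k))) with
    ((s + (1 - s - t) / 2) * snd (w k) + t * snd (w (S k)) + (1 - s - t) / 2 * - snd (w k)) by field.
  exact HQ.
Qed.

Definition rot (b : R) (x : pt) : pt :=
  (cos b * fst x - sin b * snd x, sin b * fst x + cos b * snd x).

Lemma rot_dist b x y : Defs.dist (rot b x) (rot b y) = Defs.dist x y.
Proof.
  unfold Defs.dist, rot; cbn [fst snd]. f_equal.
  pose proof (sin2_cos2 b) as H. unfold Rsqr in H.
  replace ((cos b * fst x - sin b * snd x - (cos b * fst y - sin b * snd y)) ^ 2 +
           (sin b * fst x + cos b * snd x - (sin b * fst y + cos b * snd y)) ^ 2)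
    with ((sin b * sin b + cos b * cos b) * ((fst x - fst y) ^ 2 + (snd x - snd y) ^ 2)) by ring.
  rewrite H. ring.
Qed.

Lemma rot_pcomb m a th b lam : rot b (pcomb m a th lam) = pcomb m a (th + b) lam.
Proof.
  unfold rot, pcomb; cbn [fst snd]. f_equal.
  - replace (cos b * sum_f_R0 (fun k => lam k * fst (vertex m a th k)) (2 * m - 1) -
             sin b * sum_f_R0 (fun k => lam k * snd (vertex m a th k)) (2 * m - 1))
      with (sum_f_R0 (fun k => lam k * fst (vertex m a th k)) (2 * m - 1) * cos b +
            sum_f_R0 (fun k => lam k * snd (vertex m a th k)) (2 * m - 1) * (- sin b)) by ring.
    rewrite sum_dot. apply sum_eq. intros i _. unfold vertex; cbn [fst snd].
    replace (th + b + INR i * (2 * PI / INR (2 * m))) with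
      ((th + INR i * (2 * PI / INR (2 * m))) + b) by ring.
    rewrite (cos_plus _ b). ring.
  - replace (sin b * sum_f_R0 (fun k => lam k * fst (vertex m a th k)) (2 * m - 1) +
             cos b * sum_f_R0 (fun k => lam k * snd (vertex m a th k)) (2 * m - 1))
      with (sum_f_R0 (fun k => lam k * fst (vertex m a th k)) (2 * m - 1) * sin b +
            sum_f_R0 (fun k => lam k * snd (vertex m a th k)) (2 * m - 1) * cos b) by ring.
    rewrite sum_dot. apply sum_eq. intros i _. unfold vertex; cbn [fst snd].
    replace (th + b + INR i * (2 * PI / INR (2 * m))) with
      ((th + INR i * (2 * PI / INR (2 * m))) + b) by ring.
    rewrite (sin_plus _ b). ring.
Qed.

Theorem mainTheorem6 (m : nat) (a th0 : R) :
  (2 <= m)%nat -> 0 < a ->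
  sin ((PI - 2 * PI / INR (2 * m)) / 2) = 1 / a ^ 2 ->
  ~ (forall x, dual_wulff (regular_polygon m a th0) x <-> regular_polygon m a th0 x) /\
  congruent (regular_polygon m a th0) (dual_wulff (regular_polygon m a th0)).
Proof.
  intros Hm Ha Hs.
  assert (Hm1 : (1 <= m)%nat) by lia.
  assert (HM : 2 <= INR m) by (replace 2 with (INR 2) by (simpl; ring); apply le_INR; lia).
  assert (Ha2 : 0 < a ^ 2) by (apply pow_lt; lra).
  assert (Hc : a ^ 2 * cos (PI / INR (2 * m)) = 1).
  { rewrite <- sin_shift.
    replace (PI / 2 - PI / INR (2 * m)) with ((PI - 2 * PI / INR (2 * m)) / 2)
      by (rewrite INR2m; field; lra).
    rewrite Hs. field. lra. }
  split.
  - intros Hiff.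
    assert (HD : DP m a th0 (vertex m a th0 0)) by (apply Hiff; apply vertex_in; assumption).
    pose proof (key_dual m a th0 _ 0 Hm1 Ha HD) as H.
    unfold dot in H. pose proof (vnorm m a th0 0) as Hn.
    assert (Hb : 0 < PI / INR (2 * m)).
    { rewrite INR2m. apply Rdiv_lt_0_compat; [pose proof PI_RGT_0; lra | lra]. }
    assert (Hcb : cos (PI / INR (2 * m)) < 1).
    { assert (Hpi : PI / INR (2 * m) <= PI).
      { rewrite INR2m. pose proof PI_RGT_0. apply (Rmult_le_reg_r (2 * INR m)); [lra|].
      unfold Rdiv. rewrite Rmult_assoc, Rinv_l by lra. nra. }
      pose proof PI_RGT_0. pose proof (cos_decreasing_1 0 (PI / INR (2 * m))) as Hd.
      rewrite cos_0 in Hd. apply Hd; lra. }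
    assert (Hle : a ^ 2 <= 1) by (rewrite <- Hn; replace (fst (vertex m a th0 0) ^ 2 + snd (vertex m a th0 0) ^ 2) with (fst (vertex m a th0 0) * fst (vertex m a th0 0) + snd (vertex m a th0 0) * snd (vertex m a th0 0)) by ring; exact H). assert (a ^ 2 * cos (PI / INR (2 * m)) < a ^ 2 * 1) by (apply Rmult_lt_compat_l; lra). lra.
  - exists (rot (PI / INR (2 * m))). split.
    + intros x y. apply rot_dist.
    + intros y. split.
      * intros Hy. apply (DP_in_Q m a th0 y Hm Ha Hc) in Hy.
        destruct (P_elim _ _ _ _ Hy) as [lam [H1 [H2 H3]]].
        exists (pcomb m a th0 lam). split.
        -- exists lam. auto.
        -- rewrite rot_pcomb. symmetry. exact H3.
      * intros [x [Hx Hfx]]. apply (Q_in_DP m a th0 y Hm Ha Hc).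
        destruct (P_elim _ _ _ _ Hx) as [lam [H1 [H2 H3]]].
        subst x y. rewrite rot_pcomb. exists lam. auto.
Qed.
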